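(* In the setting below, for every $m\in\mathbb N$ with $1\le m\le \ell N$, $$\mathbb E\,S(\widetilde{a_m})\le(8+16C_G)\,\mathbb E\,S(a_m).$$
   Context: Let $n,N\in\mathbb N$, $I=\{1,\dots,n\}$, $J=\{1,\dots,N\}$, $G$ a nonempty finite set of maps $I\to J$, $\mathbb P$ the normalized counting measure on $G$ ($\mathbb P(E)=|E|/|G|$) and $\mathbb E$ its expectation. Assume there is a constant $C_G\ge1$ such that for all $i\in I,j\in J$, $\mathbb P(g(i)=j)=1/N$, and for all pairs $(i_1,j_1)\ne(i_2,j_2)$ in $I\times J$, $\mathbb P(g(i_1)=j_1,g(i_2)=j_2)\le C_G/N^2$. Fix an integer $1\le\ell\le n$ and a matrix $a\in\mathbb R^{n\times N}$ with non-negative entries, and let $h:\{1,\dots,nN\}\to I\times J$ be a bijection with $a(h(j))\ge a(h(j+1))$ for $1\le j<\ell N$ and $a(h(j))=0$ for $\ell N<j\le nN$ (for a matrix $b$, $b(i,j)=b_{ij}$). Let $\mathcal A_h$ be the set of non-negative $n\times N$ matrices $b$ with $b(h(j))\ge b(h(j+1))$ for $1\le j<\ell N$ and $b(h(j))=0$ for $\ell N<j\le nN$. For $b\in\mathcal A_h$ let $\widetilde b$ be the matrix with $\widetilde b(h(j))=\big(\frac1{\ell N}\sum_{i=1}^{\ell N}b(h(i))\big)\mathbb 1_{\{1,\dots,\ell N\}}(j)$ for $1\le j\le nN$. For $1\le m\le nN$ let $a_m$ be the matrix with $a_m(h(k))=\mathbb 1_{\{1,\dots,m\}}(k)$. For $b\in\mathcal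 A_h$ and $g\in G$ let $S_k(b)(g)$ be the $k$-th largest (with multiplicity) of the numbers $b_{1g(1)},\dots,b_{ng(n)}$, and $S(b)(g)=\sum_{k=1}^{\ell}S_k(b)(g)$. *)

(* Defs.v *)
From HB Require Import structures.
From mathcomp Require Import all_boot all_order all_algebra.
Set Implicit Arguments. Unset Strict Implicit. Unset Printing Implicit Defensive.
Import Order.TTheory GRing.Theory Num.Theory.
Local Open Scope ring_scope.

(* Indices are 0-based: I = 'I_n, J = 'I_N, {1..nN} = 'I_(n*N). *)

Section Defs.
Variable R : realFieldType.
Variables n N : nat.

Definition Prob (G : {set {ffun 'I_n -> 'I_N}}) (E : pred {ffun 'I_n -> 'I_N}) : R :=
  #|[set g in G | E g]|%:R / #|G|%:R.

Definition Expect (G : {set {ffun 'I_n -> 'I_N}}) (X : {ffun 'I_n -> 'I_N} -> R) : R :=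
  (\sum_(g in G) X g) / #|G|%:R.

Definition sorted_vals (b : 'M[R]_(n, N)) (g : {ffun 'I_n -> 'I_N}) : seq R :=
  sort (fun x y : R => y <= x) [seq b i (g i) | i <- enum 'I_n].

Definition Sk (b : 'M[R]_(n, N)) (k : nat) (g : {ffun 'I_n -> 'I_N}) : R :=
  nth 0 (sorted_vals b g) k.-1.

Definition Ssum (l : nat) (b : 'M[R]_(n, N)) (g : {ffun 'I_n -> 'I_N}) : R :=
  \sum_(1 <= k < l.+1) Sk b k g.

(* a_m : a_m(h(k)) = 1 if k in {1..m} (0-based: k < m), 0 otherwise *)
Definition a_m (h : 'I_(n * N) -> 'I_n * 'I_N) (m : nat) : 'M[R]_(n, N) :=
  \matrix_(i, j) (if [exists k : 'I_(n * N), (h k == (i, j)) && (k < m)%N]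
                  then 1 else 0).

Definition tilde (h : 'I_(n * N) -> 'I_n * 'I_N) (l : nat) (b : 'M[R]_(n, N))
  : 'M[R]_(n, N) :=
  let avg := (\sum_(k : 'I_(n * N) | (k < l * N)%N) b (h k).1 (h k).2)
               / (l * N)%:R in
  \matrix_(i, j) (if [exists k : 'I_(n * N), (h k == (i, j)) && (k < l * N)%N]
                  then avg else 0).
End Defs.

(* Main.v *)
Require Import Defs.
From HB Require Import structures.
From mathcomp Require Import all_boot all_order all_algebra.
From mathcomp Require Import ring lra.
Import Order.TTheory GRing.Theory Num.Theory.
Local Open Scope ring_scope.

Section Lists.
Variable R : realFieldType.

Lemma sum_nth_ext (s : seq R) (L : nat) : (size s <= L)%N ->
  \sum_(x <- s) x = \sum_(0 <= k < L) nth 0 s k.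
Proof.
move=> hL; rewrite (big_nth 0) (big_cat_nat (leq0n _) hL) /=.
rewrite [X in _ + X]big1_seq ?addr0 // => k /andP[_]; rewrite mem_index_iota => /andP[hk _].
by rewrite nth_default.
Qed.

Lemma prefix_le (s : seq R) (l : nat) : all (fun x => 0 <= x) s ->
  \sum_(0 <= k < l) nth 0 s k <= \sum_(x <- s) x.
Proof.
move=> hs; rewrite (@sum_nth_ext s _ (leq_addl l (size s))).
rewrite (big_cat_nat (leq0n _) (leq_addr (size s) l)) /= lerDl.
apply: sumr_ge0 => k _; case: (ltnP k (size s)) => hk.
  by apply: (allP hs); rewrite mem_nth.
by rewrite nth_default.
Qed.

Lemma prefix01 (s : seq R) (l : nat) : (1 <= l)%N ->
  sorted (fun x y : R => y <= x) s -> all (fun x => (x == 0) || (x == 1)) s ->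
  \sum_(0 <= k < l) nth 0 s k = \sum_(x <- s) x \/
  \sum_(0 <= k < l) nth 0 s k = l%:R.
Proof.
move=> hl hsort h01.
have tr : transitive (fun x y : R => y <= x) by move=> x y z hyx hzy; exact: le_trans hzy hyx.
have rf : reflexive (fun x y : R => y <= x) by move=> x; exact: lexx.
have Hn := sorted_leq_nth tr rf 0 hsort.
have v01 : forall k, (nth 0 s k == 0) || (nth 0 s k == 1).
  move=> k; case: (ltnP k (size s)) => hk; first by apply: (allP h01); rewrite mem_nth.
  by rewrite nth_default // eqxx.
case/orP: (v01 l.-1) => /eqP hv.
- left; rewrite (@sum_nth_ext s _ (leq_addl l (size s))).
  rewrite (big_cat_nat (leq0n _) (leq_addr (size s) l)) /=.
  rewrite [X in _ = _ + X]big1_seq ?addr0 // => k /andP[_]; rewrite mem_index_iota => /andP[hk _].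
  case: (ltnP k (size s)) => hks; last by rewrite nth_default.
  have hlk : (l.-1 <= k)%N by apply: leq_trans (leq_pred l) hk.
  have hls : (l.-1 < size s)%N by apply: leq_ltn_trans hlk hks.
  have := Hn l.-1 k hls hks; rewrite /= hv.
  rewrite hlk.
  move=> /(_ isT) hle.
  by case/orP: (v01 k) => /eqP e //; move: hle; rewrite e ler10.
- right.
  have hls : (l.-1 < size s)%N.
    by rewrite ltnNge; apply/negP => hh; move: hv; rewrite nth_default // => /eqP; rewrite eq_sym oner_eq0.
  transitivity (\sum_(0 <= k < l) (1:R)); last by rewrite sumr_const_nat subn0.
  apply: eq_big_nat => k /andP[_ hk].
  have hkl : (k <= l.-1)%N by rewrite -ltnS prednK.
  have hks : (k < size s)%N by apply: leq_ltn_trans hkl hls.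
  have := Hn k l.-1 hks hls; rewrite /= hv hkl => /(_ isT) hle.
  case/orP: (v01 k) => /eqP e; rewrite e //; by move: hle; rewrite e ler10.
Qed.
End Lists.
Section B.
Variable R : realFieldType.
Variables n N : nat.

Lemma sum_ind (G : {set {ffun 'I_n -> 'I_N}}) (E : pred {ffun 'I_n -> 'I_N}) :
  G != set0 -> \sum_(g in G) ((E g)%:R : R) = Prob R G E * #|G|%:R.
Proof.
move=> hG; have hc : (#|G|%:R : R) != 0 by rewrite pnatr_eq0 -lt0n card_gt0.
rewrite /Prob divfK //.
rewrite (eq_bigr (fun g => if E g then 1 else 0)); last by move=> g _; case: (E g).
rewrite -big_mkcondr /= sumr_const; congr (_%:R).
by apply: eq_card => g; rewrite !inE.
Qed.

Lemma sum_diag (K : nat) (F : 'I_K -> R) (k : 'I_K) :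
  \sum_(k' : 'I_K) ((k == k')%:R * F k') = F k.
Proof.
rewrite (bigD1 k) //= eqxx mul1r big1 ?addr0 // => k' hk.
by rewrite eq_sym (negbTE hk) mul0r.
Qed.

Lemma sum_count (K M : nat) : (M <= K)%N ->
  \sum_(k : 'I_K) (((k < M)%N)%:R : R) = M%:R.
Proof.
move=> hMK; rewrite -(big_mkord xpredT (fun k => (((k < M)%N)%:R : R))).
rewrite (big_cat_nat (leq0n M) hMK) /=.
rewrite [X in _ + X]big_nat_cond [X in _ + X]big1 ?addr0; last first.
  by move=> k /andP[/andP[hk _] _]; rewrite ltnNge hk.
rewrite big_nat_cond (eq_bigr (fun _ => 1)); last by move=> k /andP[/andP[_ ->] _].
by rewrite -big_nat_cond sumr_const_nat subn0.
Qed.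

Lemma sum_pairs (F : 'I_n -> 'I_N -> R) (g : {ffun 'I_n -> 'I_N})
   (h : 'I_(n * N) -> 'I_n * 'I_N) : bijective h ->
  \sum_i F i (g i) = \sum_(k : 'I_(n*N)) ((g (h k).1 == (h k).2)%:R * F (h k).1 (h k).2).
Proof.
move=> hb.
transitivity (\sum_i \sum_j ((g i == j)%:R * F i j)).
  by apply: eq_bigr => i _; rewrite (bigD1 (g i)) //= eqxx mul1r big1 ?addr0 // => j hj; rewrite eq_sym (negbTE hj) mul0r.
rewrite pair_big /=.
rewrite (reindex h) //; exact: onW_bij.
Qed.
End B.
Section C.
Variable R : realFieldType.
Variables n N : nat.
Implicit Types (b : 'M[R]_(n, N)) (g : {ffun 'I_n -> 'I_N}).

Lemma Ssum_nth b g l :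
  Ssum l b g = \sum_(0 <= k < l) nth 0 (sorted_vals b g) k.
Proof. by rewrite /Ssum big_add1 /=; apply: eq_bigr. Qed.

Lemma sorted_vals_sum b g :
  \sum_(x <- sorted_vals b g) x = \sum_i b i (g i).
Proof. by rewrite /sorted_vals (perm_big _ (permEl (perm_sort _ _))) big_map big_enum. Qed.

Lemma sorted_vals_sorted b g : sorted (fun x y : R => y <= x) (sorted_vals b g).
Proof. apply: sort_sorted => x y; exact: le_total. Qed.

Lemma sorted_vals_all b g (P : pred R) : (forall i j, P (b i j)) ->
  all P (sorted_vals b g).
Proof.
move=> hP; rewrite /sorted_vals all_sort; apply/allP => x /mapP[i _ ->]; exact: hP.
Qed.
End C.

Lemma f_le (R : realFieldType) (t x L : R) : 0 < t <= 1 -> 0 <= x -> 0 < L ->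
  t * x - t ^+ 2 / (4 * L) * x ^+ 2 <= x /\ t * x - t ^+ 2 / (4 * L) * x ^+ 2 <= L.
Proof.
move=> /andP[t0 t1] x0 L0; split.
  have hs : 0 <= t ^+ 2 / (4 * L) by rewrite divr_ge0 ?exprn_ge0 ?ltW ?mulr_gt0.
  move: hs; set s := t ^+ 2 / (4 * L) => hs; nra.
have h4 : 0 < 4 * L by rewrite mulr_gt0.
rewrite lerBlDr -subr_ge0.
have -> : L + t ^+ 2 / (4 * L) * x ^+ 2 - t * x = (t * x - 2 * L) ^+ 2 / (4 * L).
  by field; rewrite gt_eqF.
by rewrite divr_ge0 ?sqr_ge0 // ltW.
Qed.

Lemma final_ineq (R : realFieldType) (C L p A B gam : R) :
  1 <= C -> 1 <= L -> 0 < p -> p <= L -> 0 < gam -> A <= gam * p ->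
  (1 + C)^-1 * (gam * p) - (1 + C)^-1 ^+ 2 / (4 * L) * (gam * p + C * gam * p ^+ 2) <= B ->
  A / gam <= (8 + 16 * C) * (B / gam).
Proof.
move=> C1 L1 p0 pL g0 hA hB.
have D0 : 0 < 1 + C by lra.
have L0 : 0 < L by lra.
have t0 : 0 < (1 + C)^-1 by rewrite invr_gt0.
have ht : (1 + C)^-1 * (1 + C) = 1 by rewrite mulVf // gt_eqF.
have hu0 : 0 <= (1 + C)^-1 ^+ 2 / (4 * L) by rewrite divr_ge0 ?exprn_ge0 ?ltW ?mulr_gt0.
have hu : (1 + C)^-1 ^+ 2 / (4 * L) * (4 * L) = (1 + C)^-1 ^+ 2 by rewrite divfK // gt_eqF ?mulr_gt0.
move: hB hu0 hu t0 ht.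
set t := (1 + C)^-1; set u := t ^+ 2 / (4 * L) => hB hu0 hu t0 ht.
have k1 : t * (1 + C * p) <= L.
  have tC : 0 <= t * C by rewrite mulr_ge0 ?ltW //; lra.
  have e1 : 0 <= t * C * (L - p) by rewrite mulr_ge0 //; lra.
  have e2 : 0 <= t * (L - 1) by apply: mulr_ge0; lra.
  nra.
have k2 : u * (1 + C * p) <= t / 4.
  have : u * (1 + C * p) * (4 * L) <= t / 4 * (4 * L).
    rewrite mulrAC hu.
    have -> : t / 4 * (4 * L) = t * L by field.
    rewrite expr2 -mulrA; apply: ler_wpM2l; [exact: ltW | exact: k1].
  by rewrite ler_pM2r // mulr_gt0.
have k3 : 1 <= (8 + 16 * C) * (t - u * (1 + C * p)).
  have : (8 + 16 * C) * (3 * t / 4) <= (8 + 16 * C) * (t - u * (1 + C * p)).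
    rewrite ler_wpM2l; lra.
  apply: le_trans.
  have -> : (8 + 16 * C) * (3 * t / 4) = (6 + 12 * C) * t by field.
  nra.
rewrite mulrA ler_pM2r ?invr_gt0 //.
apply: (le_trans hA).
have hB' : gam * p * (t - u * (1 + C * p)) <= B.
  apply: le_trans hB; rewrite le_eqVlt; apply/orP; left; apply/eqP; ring.
have gp0 : 0 < gam * p by rewrite mulr_gt0.
apply: le_trans (_ : (8 + 16 * C) * (gam * p * (t - u * (1 + C * p))) <= _).
  nra.
rewrite ler_wpM2l //; lra.
Qed.

Theorem lemma3p4 (R : realFieldType) (n N : nat)
  (G : {set {ffun 'I_n -> 'I_N}}) (CG : R)
  (HG0 : G != set0)
  (HCG : 1 <= CG)
  (Hmarg : forall (i : 'I_n) (j : 'I_N),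
      Prob R G (fun g => g i == j) = 1 / N%:R)
  (Hpair : forall (i1 i2 : 'I_n) (j1 j2 : 'I_N), (i1, j1) != (i2, j2) ->
      Prob R G (fun g => (g i1 == j1) && (g i2 == j2)) <= CG / (N%:R ^+ 2))
  (l : nat) (Hl1 : (1 <= l)%N) (Hln : (l <= n)%N)
  (a : 'M[R]_(n, N)) (Ha0 : forall i j, 0 <= a i j)
  (h : 'I_(n * N) -> 'I_n * 'I_N) (Hh : bijective h)
  (Hdec : forall j k : 'I_(n * N), (k : nat) = j.+1 -> (k < l * N)%N ->
      a (h k).1 (h k).2 <= a (h j).1 (h j).2)
  (Hzero : forall j : 'I_(n * N), (l * N <= j)%N -> a (h j).1 (h j).2 = 0)
  (m : nat) (Hm1 : (1 <= m)%N) (Hm : (m <= l * N)%N) :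
  Expect G (Ssum l (tilde h l (a_m R h m)))
    <= (8 + 16 * CG) * Expect G (Ssum l (a_m R h m)).
Proof.
have hinj := bij_inj Hh.
have hN : (0 < N)%N by case: N Hm {Hmarg Hpair a Ha0 h Hh Hdec Hzero G HG0 hinj} => [|//]; rewrite muln0 leqn0 => /eqP hm; move: Hm1; rewrite hm.
have hmn : (m <= n * N)%N by apply: leq_trans Hm _; rewrite leq_mul2r Hln orbT.
have hlN : (l * N <= n * N)%N by rewrite leq_mul2r Hln orbT.
set gam : R := #|G|%:R.
have gam0 : 0 < gam by rewrite ltr0n card_gt0.
have N0 : 0 < (N%:R : R) by rewrite ltr0n.
have exq : forall M (k : 'I_(n * N)),
    [exists k', (h k' == ((h k).1, (h k).2)) && (k' < M)%N] = (k < M)%N.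
  move=> M k; rewrite -surjective_pairing; apply/existsP/idP => [[k' /andP[/eqP /hinj -> //]] | hk].
  by exists k; rewrite eqxx.
have am_h : forall k, a_m R h m (h k).1 (h k).2 = ((k < m)%N)%:R.
  by move=> k; rewrite mxE exq; case: (k < m)%N.
set c : R := m%:R / (l * N)%:R.
have tl_h : forall k, tilde h l (a_m R h m) (h k).1 (h k).2 = ((k < l * N)%N)%:R * c.
  move=> k; rewrite mxE exq /=; case: (k < l * N)%N; rewrite ?mul1r ?mul0r //.
  rewrite /c; congr (_ / _); rewrite -(@sum_count R _ _ hmn) big_mkcond /=; apply: eq_bigr => k' _.
  rewrite am_h; case: ltnP => // hk'; rewrite ltnNge (leq_trans Hm hk') //.
set ind := fun (g : {ffun 'I_n -> 'I_N}) (k : 'I_(n * N)) => ((g (h k).1 == (h k).2)%:R : R).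
have E1 : forall k, \sum_(g in G) ind g k = gam / N%:R.
  move=> k; rewrite /ind sum_ind // Hmarg mul1r mulrC.
  done.
have E3 : forall w : 'I_(n * N) -> R,
    \sum_(g in G) \sum_k ind g k * w k = gam / N%:R * \sum_k w k.
  move=> w; rewrite exchange_big mulr_sumr; apply: eq_bigr => k _.
  by rewrite -mulr_suml E1 mulrC.
have Xdef : forall g : {ffun 'I_n -> 'I_N}, \sum_i a_m R h m i (g i) = \sum_k ind g k * ((k < m)%N)%:R.
  by move=> g; rewrite (@sum_pairs R n N _ g h Hh); apply: eq_bigr => k _; rewrite am_h.
have Tdef : forall g : {ffun 'I_n -> 'I_N}, \sum_i tilde h l (a_m R h m) i (g i)
    = \sum_k ind g k * (((k < l * N)%N)%:R * c).
  by move=> g; rewrite (@sum_pairs R n N _ g h Hh); apply: eq_bigr => k _; rewrite tl_h.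
have am01 : forall i j, (a_m R h m i j == 0) || (a_m R h m i j == 1).
  by move=> i j; rewrite mxE; case: ifP => _; rewrite eqxx ?orbT.
have am0 : forall i j, 0 <= a_m R h m i j.
  by move=> i j; rewrite mxE; case: ifP => _; rewrite ?ler01.
have c0 : 0 <= c by rewrite divr_ge0 ?ler0n.
have tl0 : forall i j, 0 <= tilde h l (a_m R h m) i j.
  move=> i j; rewrite mxE; case: ifP => _ //.
  by rewrite divr_ge0 ?ler0n ?sumr_ge0 // => k _; apply: am0.
set A := \sum_(g in G) Ssum l (tilde h l (a_m R h m)) g.
set B := \sum_(g in G) Ssum l (a_m R h m) g.
set p : R := m%:R / N%:R.
have hA : A <= gam * p.
  apply: (@le_trans _ _ (\sum_(g in G) \sum_k ind g k * (((k < l * N)%N)%:R * c))).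
    apply: ler_sum => g _; rewrite -Tdef -sorted_vals_sum Ssum_nth.
    by apply: prefix_le; apply: sorted_vals_all.
  rewrite E3 -mulr_suml (@sum_count R _ _ hlN) /c /p.
  have e : (l * N)%:R * (m%:R / (l * N)%:R) = m%:R :> R by rewrite mulrC divfK // pnatr_eq0 -lt0n muln_gt0 Hl1.
  by rewrite e mulrAC -mulrA.
set u := fun k : 'I_(n * N) => (((k < m)%N)%:R : R).
have u01 : forall k, u k * u k = u k by move=> k; rewrite /u; case: (k < m)%N; rewrite ?mulr1 ?mulr0.
have u0 : forall k, 0 <= u k by move=> k; rewrite /u ler0n.
have ind0 : forall g k, 0 <= ind g k by move=> g k; rewrite /ind ler0n.
have sumu : \sum_k u k = m%:R by exact: (@sum_count R _ _ hmn).
have E2 : forall k k', \sum_(g in G) ind g k * ind g k'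
    <= (k == k')%:R * (gam / N%:R) + CG * gam / N%:R ^+ 2.
  move=> k k'.
  have hc : 0 <= CG * gam / N%:R ^+ 2.
    have CG0 : 0 <= CG by apply: le_trans HCG.
    by rewrite divr_ge0 ?exprn_ge0 ?ler0n // mulr_ge0 // ltW.
  case: (eqVneq k k') => [<-|hne].
    rewrite mul1r -(E1 k); apply: ler_wpDr => //.
    rewrite le_eqVlt; apply/orP; left; apply/eqP; apply: eq_bigr => g _.
    by rewrite /ind; case: (_ == _); rewrite ?mulr1 ?mulr0.
  rewrite mul0r add0r.
  rewrite (eq_bigr (fun g : {ffun 'I_n -> 'I_N} => (((g (h k).1 == (h k).2) && (g (h k').1 == (h k').2))%:R : R))); last first.
    by move=> g _; rewrite /ind -natrM mulnb.
  rewrite sum_ind // -/gam [X in _ <= X]mulrAC ler_pM2r // Hpair //.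
  by rewrite -!surjective_pairing; apply: contra hne => /eqP /hinj ->.
set X := fun g : {ffun 'I_n -> 'I_N} => \sum_k ind g k * u k.
have SX : \sum_(g in G) X g = gam * p by rewrite /X E3 sumu /p mulrAC -mulrA.
have SX2 : \sum_(g in G) X g ^+ 2 <= gam * p + CG * gam * p ^+ 2.
  have eq1 : \sum_(g in G) X g ^+ 2
      = \sum_k \sum_k' u k * u k' * \sum_(g in G) ind g k * ind g k'.
    transitivity (\sum_(g in G) \sum_k \sum_k' u k * u k' * (ind g k * ind g k')).
      apply: eq_bigr => g _; rewrite /X expr2 big_distrlr /=.
      apply: eq_bigr => k _; apply: eq_bigr => k' _; ring.
    rewrite exchange_big; apply: eq_bigr => k _; rewrite exchange_big.
    by apply: eq_bigr => k' _; rewrite mulr_sumr.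
  rewrite eq1.
  apply: le_trans (_ : _ <= \sum_k \sum_k' ((k == k')%:R * (u k * u k' * (gam / N%:R))
       + u k * u k' * (CG * gam / N%:R ^+ 2))) _.
    apply: ler_sum => k _; apply: ler_sum => k' _.
    apply: le_trans (ler_wpM2l (mulr_ge0 (u0 k) (u0 k')) (E2 k k')) _.
    rewrite le_eqVlt; apply/orP; left; apply/eqP; ring.
  rewrite le_eqVlt; apply/orP; left; apply/eqP.
  under eq_bigr do rewrite big_split /= (@sum_diag R _ (fun k' => u _ * u k' * (gam / N%:R))) u01.
  rewrite big_split /= -mulr_suml sumu.
  under eq_bigr do rewrite -mulr_suml -mulr_sumr sumu.
  rewrite -mulr_suml -mulr_suml sumu /p; field.
  by rewrite gt_eqF.
have C0 : 0 < 1 + CG by apply: lt_le_trans (ltr01) _; rewrite lerDl; apply: le_trans HCG.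
set t := (1 + CG)^-1.
have t0 : 0 < t by rewrite /t invr_gt0.
have t1 : t <= 1.
  by rewrite /t invf_le1 //; lra.
have L0 : 0 < (l%:R : R) by rewrite ltr0n.
set s0 := t ^+ 2 / (4 * l%:R).
have s00 : 0 <= s0 by rewrite divr_ge0 ?exprn_ge0 ?ltW ?mulr_gt0.
have X0 : forall g, 0 <= X g by move=> g; apply: sumr_ge0 => k _; apply: mulr_ge0.
have hpt : forall g, t * X g - s0 * X g ^+ 2 <= Ssum l (a_m R h m) g.
  move=> g; have [hf1 hf2] := @f_le R _ _ _ (introT andP (conj t0 t1)) (X0 g) L0.
  rewrite Ssum_nth.
  have [e|e] := @prefix01 R _ _ Hl1 (@sorted_vals_sorted R n N (a_m R h m) g) (@sorted_vals_all R n N _ g _ am01); rewrite e //.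
  by rewrite sorted_vals_sum Xdef.
have hB : t * (gam * p) - s0 * (gam * p + CG * gam * p ^+ 2) <= B.
  apply: le_trans (ler_sum _ (fun g _ => hpt g)).
  rewrite sumrB -!mulr_sumr SX lerB // ler_wpM2l //.
rewrite /Expect -/gam -/A -/B. apply: (@final_ineq R CG l%:R p A B gam HCG) => //.
- by rewrite ler1n.
- by rewrite /p divr_gt0 // ltr0n.
- by rewrite /p ler_pdivrMr // -natrM ler_nat.
Qed.
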